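(* Let $m,k\ge1$, $N=m+k$, $\alpha>0$, let $\Phi$ be a Minkowski norm on $\mathbb{R}^m$ and $\Psi$ a Minkowski norm on $\mathbb{R}^k$, with $\Phi^0$ the dual norm of $\Phi$. Suppose that, for some $A>0$, there exists a function $K>0$ on $\mathbb{R}^N$ satisfying $$2(\alpha+1)K\,\mathscr L_{\Phi,\Psi,\alpha}(K)=(m+(\alpha+1)k+2\alpha)\left[\Phi(\nabla_z K)^2+\frac{\Phi^0(z)^{2\alpha}}{4}\Psi(\nabla_\sigma K)^2\right]+A\,K^{\frac{2\alpha}{\alpha+1}}.$$ Then the function $\rho>0$ defined by $K=\rho^{2(\alpha+1)}$ solves $$\mathscr L_{\Phi,\Psi,\alpha}\big(\rho^{-(m+(\alpha+1)k-2)}\big)=-\lambda\,\rho^{-(m+(\alpha+1)k+2)}\qquad\text{with }\lambda=\frac{A(m+(\alpha+1)k-2)}{4(\alpha+1)^2}.$$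
   Context: Points of $\mathbb{R}^N=\mathbb{R}^m\times\mathbb{R}^k$ are written $(z,\sigma)$. A Minkowski norm on $\mathbb{R}^n$ is a function $M:\mathbb{R}^n\to[0,\infty)$ such that $M^2\in C^2(\mathbb{R}^n\setminus\{0\})$ is strictly convex and $M(\lambda x)=|\lambda|M(x)$ for all $x$, $\lambda\in\mathbb{R}$; its dual norm is $M^0(x)=\sup_{M(\xi)=1}\langle x,\xi\rangle$. The Finsler Laplacians are $\Delta_\Phi(v)=\operatorname{div}_z(\Phi(\nabla_z v)\nabla\Phi(\nabla_z v))$ and $\Delta_\Psi(v)=\operatorname{div}_\sigma(\Psi(\nabla_\sigma v)\nabla\Psi(\nabla_\sigma v))$, and $\mathscr L_{\Phi,\Psi,\alpha}(v)=\Delta_\Phi(v)+\frac{\Phi^0(z)^{2\alpha}}{4}\Delta_\Psi(v)$. *)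

(* Defs.v *)
From HB Require Import structures.
From mathcomp Require Import all_boot all_order all_algebra.
From mathcomp Require Import all_classical all_reals all_analysis.
Set Implicit Arguments. Unset Strict Implicit. Unset Printing Implicit Defensive.
Import Order.TTheory GRing.Theory Num.Theory.
Import numFieldNormedType.Exports.
Local Open Scope classical_set_scope.
Local Open Scope ring_scope.

Section FinslerDefs.
Variable R : realType.

Definition ev n (i : 'I_n) : 'rV[R]_n := delta_mx 0 i.

Definition pd n (f : 'rV[R]_n -> R) (x : 'rV[R]_n) (i : 'I_n) : R :=
  'D_(ev i) f x.

Definition grad n (f : 'rV[R]_n -> R) (x : 'rV[R]_n) : 'rV[R]_n :=
  \row_i pd f x i.

Definition divg n (F : 'rV[R]_n -> 'rV[R]_n) (x : 'rV[R]_n) : R :=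
  \sum_i pd (fun y => F y 0 i) x i.

Definition dotv n (x y : 'rV[R]_n) : R := \sum_i x 0 i * y 0 i.

Definition C2_away0 n (f : 'rV[R]_n -> R) : Prop :=
  [/\ forall x, x != 0 -> forall i, derivable f x (ev i),
      forall x, x != 0 -> forall i j,
          derivable (fun y => 'D_(ev i) f y) x (ev j)
    & forall x, x != 0 -> forall i j,
          {for x, continuous (fun y => 'D_(ev j) (fun z => 'D_(ev i) f z) y)}].

Definition strictly_convex n (f : 'rV[R]_n -> R) : Prop :=
  forall x y (t : R), x != y -> 0 < t < 1 ->
    f ((1 - t) *: x + t *: y) < (1 - t) * f x + t * f y.

Definition minkowski_norm n (M : 'rV[R]_n -> R) : Prop :=
  [/\ forall x, 0 <= M x,
      forall (l : R) x, M (l *: x) = `|l| * M x,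
      C2_away0 (fun x => M x ^+ 2)
    & strictly_convex (fun x => M x ^+ 2)].

Definition dual_norm n (M : 'rV[R]_n -> R) (x : 'rV[R]_n) : R :=
  sup [set dotv x xi | xi in [set xi | M xi = 1]].

Definition ffield n (M : 'rV[R]_n -> R) (xi : 'rV[R]_n) : 'rV[R]_n :=
  M xi *: grad M xi.

Variables m k : nat.

(* functions on R^N = R^m x R^k, points written (z, sigma) *)
Definition gradz (v : 'rV[R]_m -> 'rV[R]_k -> R) z s : 'rV[R]_m :=
  grad (fun z' => v z' s) z.
Definition grads (v : 'rV[R]_m -> 'rV[R]_k -> R) z s : 'rV[R]_k :=
  grad (fun s' => v z s') s.

Definition DeltaPhi (Phi : 'rV[R]_m -> R) (v : 'rV[R]_m -> 'rV[R]_k -> R) z s : R :=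
  divg (fun z' => ffield Phi (gradz v z' s)) z.
Definition DeltaPsi (Psi : 'rV[R]_k -> R) (v : 'rV[R]_m -> 'rV[R]_k -> R) z s : R :=
  divg (fun s' => ffield Psi (grads v z s')) s.

Definition LPPa (Phi : 'rV[R]_m -> R) (Psi : 'rV[R]_k -> R) (alpha : R)
  (v : 'rV[R]_m -> 'rV[R]_k -> R) z s : R :=
  DeltaPhi Phi v z s + (dual_norm Phi z) `^ (2 * alpha) / 4 * DeltaPsi Psi v z s.

Definition L_regular (Phi : 'rV[R]_m -> R) (Psi : 'rV[R]_k -> R)
  (v : 'rV[R]_m -> 'rV[R]_k -> R) : Prop :=
  [/\ forall z s i, derivable (fun z' => v z' s) z (ev i),
      forall z s j, derivable (fun s' => v z s') s (ev j),
      forall z s i, derivable (fun z' => ffield Phi (gradz v z' s) 0 i) z (ev i)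
    & forall z s j, derivable (fun s' => ffield Psi (grads v z s') 0 j) s (ev j)].

End FinslerDefs.

(* Main.v *)
Require Import Defs.
From HB Require Import structures.
From mathcomp Require Import all_boot all_order all_algebra.
From mathcomp Require Import all_classical all_reals all_analysis.
From mathcomp Require Import ring lra.
Import Order.TTheory GRing.Theory Num.Theory.
Import numFieldNormedType.Exports.
Local Open Scope ring_scope.
Local Open Scope classical_set_scope.

Section S.
Context {R : realType}.
Context {V : normedModType R}.

Lemma bridgeD (f : V -> R) x v :
  'D_v f x = 'D_1 (fun h : R => f (h *: v + x)) 0.
Proof.
rewrite /derive; set g1 := fun h => h^-1 *: _; set g2 := fun h => h^-1 *: _.
suff -> : g1 = g2 by [].
by rewrite funeqE /g1 /g2 => h /=; rewrite addr0 scale0r add0r [_%:A]mulr1.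
Qed.

Lemma chainD (f : V -> R) (g : R -> R) x v dg :
  derivable f x v -> is_derive (f x) 1 g dg ->
  is_derive x v (g \o f) (dg * 'D_v f x).
Proof.
move=> df [dgd dgv].
have dphi : derivable (fun h : R => f (h *: v + x)) 0 1 by exact: (derivable1P f x v).1.
have dg' : derivable g ((fun h : R => f (h *: v + x)) 0) 1.
  by rewrite /= scale0r add0r.
split.
  apply/(derivable1P (g \o f) x v); apply/derivable1_diffP.
  apply: (@differentiable_comp _ _ _ _ (fun h : R => f (h *: v + x)) g).
    exact/derivable1_diffP.
  exact/derivable1_diffP.
rewrite bridgeD (bridgeD f) -!derive1E.
have -> : (fun h : R => (g \o f) (h *: v + x)) = g \o (fun h : R => f (h *: v + x)) by [].
rewrite derive1_comp // derive1E /= scale0r add0r.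
by rewrite -dgv.
Qed.
End S.

Section S2.
Context {R : realType}.

Lemma rescaleD (phi : R -> R) (b x : R) :
  derivable phi (b * x) 1 ->
  is_derive x 1 (fun h => phi (b * h)) (b * 'D_1 phi (b * x)).
Proof.
move=> dphi.
have hb : is_derive x 1 (fun h : R => b * h) b.
  have := @is_deriveZ R R R id b x 1 1 _.
  by move=> /(_ (is_derive_id _ _)); rewrite [b%:A]mulr1.
have [hbd hbv] := hb.
have hphi : is_derive ((fun h : R => b * h) x) 1 phi ('D_1 phi (b * x)) by split.
by have := @chainD R R _ _ _ _ _ hbd hphi; rewrite hbv mulrC.
Qed.

Lemma dirscaleD (V : normedModType R) (f : V -> R) x v c :
  derivable f x v -> is_derive x (c *: v) f (c * 'D_v f x).
Proof.
move=> df.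
have dphi : derivable (fun h : R => f (h *: v + x)) (c * 0) 1.
  by rewrite mulr0; exact: (derivable1P f x v).1.
have E : (fun h : R => f (h *: (c *: v) + x)) = (fun h => (fun h => f (h *: v + x)) (c * h)).
  by rewrite funeqE => h /=; rewrite scalerA mulrC.
have [d1 d2] := rescaleD _ _ _ dphi.
split.
  by apply/(derivable1P f x (c *: v)); rewrite E.
by rewrite bridgeD E d2 mulr0 -bridgeD.
Qed.
End S2.


Section S3.
Context {R : realType}.

Definition convexf {V : lmodType R} (f : V -> R) := forall x y (t : R), 0 < t < 1 ->
  f ((1 - t) *: x + t *: y) <= (1 - t) * f x + t * f y.

Lemma sconvex_convex n (f : 'rV[R]_n -> R) : strictly_convex f -> convexf f.
Proof.
move=> sc x y t t01; have [->|xy] := eqVneq x y.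
  by rewrite -scalerDl -mulrDl subrK scale1r mul1r.
exact/ltW/sc.
Qed.

Lemma jensen (V : lmodType R) (f : V -> R) : convexf f ->
  forall n (y : 'I_n -> V), (0 < n)%N ->
  f (n%:R^-1 *: \sum_i y i) <= n%:R^-1 * \sum_i f (y i).
Proof.
move=> cf n; elim: n => [|n IH] y // _.
case: n IH y => [|n] IH y.
  by rewrite !big_ord1 (_ : (0.+1)%:R = 1 :> R) // invr1 scale1r mul1r.
rewrite big_ord_recr /= [X in _ <= _ * X]big_ord_recr /=.
set A := \sum_(i < n.+1) y (widen_ord _ i).
set B := \sum_(i < n.+1) f (y (widen_ord _ i)).
set t := (n.+2%:R)^-1 : R.
have n1 : (n.+1%:R : R) != 0 by rewrite pnatr_eq0.
have n2 : (n.+2%:R : R) != 0 by rewrite pnatr_eq0.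
have t01 : 0 < t < 1.
  rewrite /t invr_gt0 ltr0n /= invf_lt1 ?ltr0n // ltr1n //.
have E : t *: (A + y ord_max) = (1 - t) *: (n.+1%:R^-1 *: A) + t *: y ord_max.
  rewrite scalerDr scalerA; congr (_ *: _ + _).
  rewrite /t -natr1; field.
  by have hn : (0:R) <= n%:R by []; repeat (apply/andP; split); apply: lt0r_neq0; lra.
rewrite E; apply: le_trans (cf _ _ _ t01) _.
have IH' := IH (fun i => y (widen_ord (leqnSn _) i)) isT.
apply: le_trans (_ : (1 - t) * (n.+1%:R^-1 * B) + t * f (y ord_max) <= _).
  rewrite lerD2r; apply: ler_wpM2l; last exact: IH'.
  by rewrite subr_ge0; case/andP: t01 => _ /ltW.
rewrite le_eqVlt; apply/orP; left; apply/eqP; rewrite /t -natr1; field.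
by have hn : (0:R) <= n%:R by []; repeat (apply/andP; split); apply: lt0r_neq0; lra.
Qed.
End S3.

Section S4.
Context {R : realType}.

Lemma euler_le n (f : 'rV[R]_n -> R) (xi v : 'rV[R]_n) : (0 < n)%N -> convexf f ->
  derivable f xi v -> (forall i, derivable f xi (ev R i)) ->
  'D_v f xi <= \sum_i v 0 i * 'D_(ev R i) f xi.
Proof.
move=> n0 cf df dfi.
pose N : R := n%:R.
have N0 : N != 0 by rewrite pnatr_eq0 -lt0n.
pose u i := (N * v 0 i) *: ev R i.
have du i : is_derive xi (u i) f ((N * v 0 i) * 'D_(ev R i) f xi) by exact: dirscaleD.
pose g := fun h : R => \sum_i f (h *: u i + xi).
have dg : is_derive (0:R) (1:R) g (\sum_i 'D_(u i) f xi).
  have -> : g = \sum_i (fun h : R => f (h *: u i + xi)).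
    by rewrite fct_sumE.
  apply: is_derive_sum => i.
  have [d1 d2] := du i.
  split; first exact: (derivable1P f xi (u i)).1.
  by rewrite -bridgeD.
have [dg1 dg2] := dg.
have Hv : (fun h : R => h^-1 *: ((f \o shift xi) (h *: v) - f xi)) @ 0^' --> 'D_v f xi := df.
have Hg : (fun h : R => h^-1 *: ((g \o shift 0) (h *: (1:R)) - g 0)) @ 0^' --> 'D_1 g 0 := dg1.
have Hg' := cvgMl_tmp (a:=N^-1) (cvg_dnbhs_at_right Hg).
have := ler_cvg_to (cvg_dnbhs_at_right Hv) (Hg' _).
have -> : N^-1 * 'D_1 g 0 = \sum_i v 0 i * 'D_(ev R i) f xi.
  rewrite dg2 mulr_sumr; apply: eq_bigr => i _.
  have [_ ->] := du i.
  by rewrite mulrA mulrA mulVf // mul1r.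
apply; near=> h.
have h0 : 0 < h by near: h; exact: nbhs_right_gt.
rewrite /= [h%:A]mulr1 addr0 /g.
have -> : \sum_i f (0 *: u i + xi) = \sum_(i < n) f xi by apply: eq_bigr => i _; rewrite scale0r add0r.
rewrite sumr_const card_ord.
have J := @jensen R _ f cf n (fun i => h *: u i + xi) n0.
have E : N^-1 *: \sum_i (h *: u i + xi) = h *: v + xi.
  rewrite big_split /= -scaler_sumr sumr_const card_ord -scaler_nat.
  have -> : \sum_i u i = N *: v.
    rewrite [in RHS](row_sum_delta v) scaler_sumr; apply: eq_bigr => i _.
    by rewrite /u scalerA.
  have c1 : N^-1 * (h * N) = h by field.
  have c2 : N^-1 * n%:R = 1 by rewrite -/N; field.
  by rewrite scalerDr !scalerA c1 c2 scale1r.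
rewrite E in J.
set S := \sum_i f (h *: u i + xi) in J *.
have -> : N^-1 * (h^-1 * (S - f xi *+ n)) = h^-1 * (N^-1 * S - f xi).
  rewrite -mulr_natr -/N; field; by rewrite N0 gt_eqF.
apply: ler_wpM2l; first by rewrite invr_ge0 ltW.
by rewrite lerD2r.
Unshelve. all: by end_near.
Qed.
End S4.

Section S5.
Context {R : realType}.
Lemma sqD (C : R) : is_derive (0:R) (1:R) (fun h : R => (h + 1) ^+ 2 * C) (2 * C).
Proof.
have H1 := @is_deriveD R R R (@id R) (cst 1) 0 1 1 0 (is_derive_id _ _) (is_derive_cst _ _ _).
have H2 := @is_deriveX R R _ 2 0 1 _ H1.
have H3 := @is_deriveM R R _ (cst C) 0 1 _ _ H2 (is_derive_cst _ _ _).
have -> : (fun h : R => (h + 1) ^+ 2 * C) = ((@id R + cst 1) ^+ 2 * cst C).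
  by rewrite funeqE => h /=; rewrite exprfctE.
apply: is_derive_eq H3 _.
rewrite /= ?addrfctE ?exprfctE /=.
rewrite scaler0 add0r !add0r addr0 expr1n /GRing.scale /=; ring.
Qed.


Lemma euler_eq n (f : 'rV[R]_n -> R) xi : (0 < n)%N -> convexf f ->
  (forall (c : R) x, f (c *: x) = c ^+ 2 * f x) ->
  (forall i, derivable f xi (ev R i)) ->
  \sum_i xi 0 i * 'D_(ev R i) f xi = 2 * f xi.
Proof.
move=> n0 cf hom dfi.
have Dxi : is_derive xi xi f (2 * f xi).
  have E : (fun h : R => f (h *: xi + xi)) = (fun h => (h + 1) ^+ 2 * f xi).
    by rewrite funeqE => h; rewrite -{2}(scale1r xi) -scalerDl hom.
  have [d1 d2] := sqD (f xi).
  split; first by apply/(derivable1P f xi xi); rewrite E.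
  by rewrite bridgeD E d2.
have [dx1 dx2] := Dxi.
have le1 := euler_le _ _ _ _ n0 cf dx1 dfi.
rewrite dx2 in le1.
have [dn1 dn2] := dirscaleD _ _ _ _ (-1) dx1.
have le2 := euler_le _ _ _ _ n0 cf dn1 dfi.
rewrite dn2 dx2 in le2.
have E2 : \sum_i ((-1) *: xi) 0 i * 'D_(ev R i) f xi = - \sum_i xi 0 i * 'D_(ev R i) f xi.
  by rewrite -sumrN; apply: eq_bigr => i _; rewrite mxE mulN1r mulNr.
rewrite E2 in le2.
lra.
Qed.
End S5.

Section S6.
Context {R : realType} {n : nat} (Phi : 'rV[R]_n -> R) (MN : minkowski_norm Phi).

Let f := fun x : 'rV[R]_n => Phi x ^+ 2.

Lemma Phi0 : Phi 0 = 0.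
Proof. by case: MN => _ hom _ _; rewrite -(scale0r 0) hom normr0 mul0r. Qed.

Lemma Phi_ge0 x : 0 <= Phi x.
Proof. by case: MN. Qed.

Lemma f_hom (c : R) x : f (c *: x) = c ^+ 2 * f x.
Proof. by case: MN => _ hom _ _; rewrite /f hom exprMn real_normK ?num_real. Qed.

Lemma Phi_gt0 x : x != 0 -> 0 < Phi x.
Proof.
move=> x0; rewrite lt_neqAle Phi_ge0 andbT; apply/eqP => Px.
case: MN => _ _ _ sc.
have t01 : 0 < (2:R)^-1 < 1 by apply/andP; split; lra.
have := sc 0 x (2^-1) _ t01; rewrite eq_sym x0 => /(_ isT).
rewrite -Px Phi0 expr0n /= !mulr0 addr0.
by rewrite ltNge sqr_ge0.
Qed.

Lemma f_der (x : 'rV[R]_n) i : x != 0 -> derivable f x (ev R i).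
Proof. by move=> x0; case: MN => _ _ [d _ _] _; exact: d. Qed.

Lemma Phi_der (x : 'rV[R]_n) i : x != 0 ->
  is_derive x (ev R i) Phi ((2 * Phi x)^-1 * 'D_(ev R i) f x).
Proof.
move=> x0.
have E : Phi = Num.sqrt \o f.
  by rewrite funeqE => y; rewrite /f /= sqrtr_sqr ger0_norm // Phi_ge0.
have fx0 : 0 < f x by rewrite /f exprn_gt0 // Phi_gt0.
have := @chainD _ _ f Num.sqrt x (ev R i) _ (f_der x i x0) (is_derive1_sqrt fx0).
by rewrite -E {1}/f sqrtr_sqr ger0_norm // Phi_ge0.
Qed.

Lemma ffield0 : ffield Phi 0 = 0.
Proof. by rewrite /ffield Phi0 scale0r. Qed.

Lemma ffield_entry (x : 'rV[R]_n) i : x != 0 -> ffield Phi x 0 i = 'D_(ev R i) f x / 2.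
Proof.
move=> x0; rewrite /ffield /grad !mxE /pd.
have [_ ->] := Phi_der x i x0.
have := Phi_gt0 x x0; rewrite lt0r => /andP [P0 _].
by field; rewrite P0.
Qed.

Lemma ffield_euler (x : 'rV[R]_n) : (0 < n)%N -> \sum_i x 0 i * ffield Phi x 0 i = Phi x ^+ 2.
Proof.
move=> n0; have [->|x0] := eqVneq x 0.
  rewrite ffield0 Phi0 expr0n /= big1 // => i _.
  by rewrite !mxE mul0r.
have -> : \sum_i x 0 i * ffield Phi x 0 i = (\sum_i x 0 i * 'D_(ev R i) f x) / 2.
  by rewrite mulr_suml; apply: eq_bigr => i _; rewrite ffield_entry // mulrA.
have sc : strictly_convex f by case: MN.
rewrite (euler_eq _ _ _ n0 (sconvex_convex _ _ sc) f_hom (fun i => f_der x i x0)).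
by rewrite /f; field.
Qed.

Lemma f_der_hom (c : R) (x : 'rV[R]_n) i : c != 0 -> x != 0 ->
  'D_(ev R i) f (c *: x) = c * 'D_(ev R i) f x.
Proof.
move=> c0 x0.
rewrite bridgeD (bridgeD f x).
set phi := fun h : R => f (h *: ev R i + x).
have E : (fun h : R => f (h *: ev R i + c *: x)) = (fun h => c ^+ 2 * phi (c^-1 * h)).
  rewrite funeqE => h; rewrite /phi -f_hom scalerDr scalerA mulrA mulfV // mul1r //.
rewrite E.
have dphi : derivable phi (c^-1 * 0) 1.
  by rewrite mulr0; exact: (derivable1P f x (ev R i)).1 (f_der x i x0).
have [d1 d2] := rescaleD _ _ _ dphi.
have := deriveMl (c ^+ 2) d1.
rewrite /= => ->.
rewrite d2 mulr0.
by field.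
Qed.

Lemma ffield_hom (c : R) (x : 'rV[R]_n) : c != 0 -> ffield Phi (c *: x) = c *: ffield Phi x.
Proof.
move=> c0; have [->|x0] := eqVneq x 0.
  by rewrite scaler0 ffield0 scaler0.
have cx0 : c *: x != 0 by rewrite scaler_eq0 negb_or c0 x0.
apply/rowP => i; rewrite [RHS]mxE (ffield_entry (c *: x)) // (ffield_entry x) // f_der_hom //.
by rewrite mulrA.
Qed.
End S6.

Section S7.
Context {R : realType} {V : normedModType R}.

Lemma deriveM' (A B : V -> R) x v : derivable A x v -> derivable B x v ->
  derivable (fun y => A y * B y) x v /\
  'D_v (fun y => A y * B y) x = A x * 'D_v B x + B x * 'D_v A x.
Proof.
move=> dA dB; have H1 := derivableM dA dB; have H2 := deriveM dA dB.
by rewrite mulrfctE in H1 H2; split.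
Qed.

Lemma pow_der (F : V -> R) x v q : 0 < F x -> derivable F x v ->
  is_derive x v (fun y => F y `^ q) (q * F x `^ (q - 1) * 'D_v F x).
Proof.
move=> F0 dF; have [H1 H2] := (@chainD _ _ F (fun t : R => t `^ q) x v _ dF (@is_derive1_powR _ q (F x) F0)).
by split.
Qed.

Lemma cpow_der (F : V -> R) x v p q : 0 < F x -> derivable F x v ->
  is_derive x v (fun y => p * F y `^ q) (p * (q * F x `^ (q - 1) * 'D_v F x)).
Proof.
move=> F0 dF; have [d1 d2] := pow_der _ _ _ q F0 dF.
have [e1 e2] := deriveM' _ _ _ _ (derivable_cst p x v) d1.
split; first exact: e1.
by rewrite e2 d2 derive_cst mulr0 addr0.
Qed.
End S7.

Section S8.
Context {R : realType} {n : nat} (Phi : 'rV[R]_n -> R) (MN : minkowski_norm Phi).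

Lemma core (F : 'rV[R]_n -> R) p y : (0 < n)%N -> p != 0 ->
  (forall y', 0 < F y') -> (forall y' i, derivable F y' (ev R i)) ->
  (forall i, derivable (fun y' => ffield Phi (grad F y') 0 i) y (ev R i)) ->
  divg (fun y' => ffield Phi (grad (fun y'' => F y'' `^ p) y')) y =
  p * F y `^ (p - 1) * divg (fun y' => ffield Phi (grad F y')) y
  + p * (p - 1) * F y `^ (p - 1 - 1) * Phi (grad F y) ^+ 2.
Proof.
move=> n0 p0 Fpos dF dG.
have gradE y' : grad (fun y'' => F y'' `^ p) y' = (p * F y' `^ (p - 1)) *: grad F y'.
  apply/rowP => i; rewrite !mxE /pd.
  by have [_ ->] := pow_der _ _ _ p (Fpos y') (dF y' i).
have Ept y' : ffield Phi (grad (fun y'' => F y'' `^ p) y') =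
         (p * F y' `^ (p - 1)) *: ffield Phi (grad F y').
  rewrite gradE ffield_hom //.
  by rewrite mulf_neq0 // gt_eqF // powR_gt0.
rewrite /divg.
have T i : pd (fun y' => ffield Phi (grad (fun y'' => F y'' `^ p) y') 0 i) y i =
   p * F y `^ (p - 1) * pd (fun y' => ffield Phi (grad F y') 0 i) y i
   + p * (p - 1) * F y `^ (p - 1 - 1) * ((grad F y) 0 i * ffield Phi (grad F y) 0 i).
  rewrite /pd.
  have -> : (fun y' => ffield Phi (grad (fun y'' => F y'' `^ p) y') 0 i) =
            (fun y' => (p * F y' `^ (p - 1)) * ffield Phi (grad F y') 0 i).
    by rewrite funeqE => y'; rewrite Ept mxE.
  have [c1 c2] := cpow_der _ _ _ p (p - 1) (Fpos y) (dF y i).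
  have [_ ->] := deriveM' _ _ _ _ c1 (dG i).
  rewrite c2.
  rewrite [grad F y 0 i]mxE /pd.
  set d1 := 'D_(ev R i) F y.
  set d2 := 'D_(ev R i) (fun y' => ffield Phi (grad F y') 0 i) y.
  set g1 := ffield Phi (grad F y) 0 i.
  set P1 := F y `^ (p - 1).
  set P2 := F y `^ (p - 1 - 1).
  ring.
apply: eq_trans; first by apply: eq_bigr => i _; exact: T i.
rewrite big_split /= -!mulr_sumr.
by rewrite (ffield_euler Phi MN) //.
Qed.
End S8.

Local Close Scope classical_set_scope.

Theorem proposition2p3 (R : realType) (m k : nat) (alpha A : R)
  (Phi : 'rV[R]_m -> R) (Psi : 'rV[R]_k -> R)
  (K : 'rV[R]_m -> 'rV[R]_k -> R) :
  (0 < m)%N -> (0 < k)%N -> 0 < alpha ->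
  minkowski_norm Phi -> minkowski_norm Psi ->
  0 < A ->
  (forall z s, 0 < K z s) ->
  L_regular Phi Psi K ->
  (forall z s,
     2 * (alpha + 1) * K z s * LPPa Phi Psi alpha K z s =
     (m%:R + (alpha + 1) * k%:R + 2 * alpha) *
       (Phi (gradz K z s) ^+ 2
        + (dual_norm Phi z) `^ (2 * alpha) / 4 * Psi (grads K z s) ^+ 2)
     + A * (K z s) `^ (2 * alpha / (alpha + 1))) ->
  let rho := fun z s => K z s `^ (1 / (2 * (alpha + 1))) in
  let Q := m%:R + (alpha + 1) * k%:R in
  let lambda := A * (Q - 2) / (4 * (alpha + 1) ^+ 2) in
  (forall z s, 0 < rho z s /\ K z s = rho z s `^ (2 * (alpha + 1))) /\
  (forall z s,
     LPPa Phi Psi alpha (fun z' s' => rho z' s' `^ (- (Q - 2))) z s =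
     - lambda * rho z s `^ (- (Q + 2))).
Proof.
move=> m0 k0 a0 MPhi MPsi A0 Kpos [dKz dKs dGz dGs] HK rho Q lambda.
have a1 : alpha + 1 != 0 by rewrite gt_eqF //; lra.
split.
  move=> z s; split; first by rewrite /rho powR_gt0.
  by rewrite /rho -powRrM (_ : 1 / (2 * (alpha + 1)) * (2 * (alpha + 1)) = 1) ?powRr1 ?ltW //; field.
move=> z s.
have m1 : (1:R) <= m%:R by rewrite ler1n.
have k1 : (1:R) <= k%:R by rewrite ler1n.
have Q2 : 0 < Q - 2 by rewrite /Q; nra.
pose p := 1 / (2 * (alpha + 1)) * - (Q - 2).
have p0 : p != 0.
  rewrite /p mulf_neq0 //; first by rewrite div1r invr_eq0 mulf_neq0.
  by rewrite oppr_eq0 gt_eqF.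
have Ev : (fun z' s' => rho z' s' `^ (- (Q - 2))) = (fun z' s' => K z' s' `^ p).
  by rewrite funeqE => z'; rewrite funeqE => s'; rewrite /rho -powRrM.
rewrite Ev.
have H1 := core Phi MPhi (fun z' => K z' s) p z m0 p0 (fun z' => Kpos z' s) (fun z' i => dKz z' s i) (fun i => dGz z s i).
have H2 := core Psi MPsi (fun s' => K z s') p s k0 p0 (fun s' => Kpos z s') (fun s' j => dKs z s' j) (fun j => dGs z s j).
have -> : LPPa Phi Psi alpha (fun z' s' => K z' s' `^ p) z s =
  (p * K z s `^ (p - 1) * DeltaPhi Phi K z s
  + p * (p - 1) * K z s `^ (p - 1 - 1) * Phi (gradz K z s) ^+ 2)
  + dual_norm Phi z `^ (2 * alpha) / 4 *
  (p * K z s `^ (p - 1) * DeltaPsi Psi K z s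
  + p * (p - 1) * K z s `^ (p - 1 - 1) * Psi (grads K z s) ^+ 2).
  by rewrite /LPPa; congr (_ + _ * _); [exact: H1 | exact: H2].
have := HK z s; rewrite /LPPa.
set X := DeltaPhi Phi K z s.
set Z := DeltaPsi Psi K z s.
set D := dual_norm Phi z `^ (2 * alpha) / 4.
set Y := Phi (gradz K z s) ^+ 2.
set W := Psi (grads K z s) ^+ 2.
set E := K z s `^ (2 * alpha / (alpha + 1)).
set kap := K z s.
move=> H.
have kap0 : kap != 0 by rewrite gt_eqF //; exact: Kpos.
have nz : forall r : R, ((r == 1) ==> (kap != 0))%B by move=> r; case: (r == 1).
have Kp1 : kap `^ (p - 1) = kap `^ p / kap by rewrite powRB // powRr1 // ltW //; exact: Kpos.
have Kp2 : kap `^ (p - 1 - 1) = kap `^ p / kap / kap by rewrite !powRB // powRr1 // ltW //; exact: Kpos.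
have ex : 1 / (2 * (alpha + 1)) * - (Q + 2) = p + 2 * alpha / (alpha + 1) - 1 - 1.
  by rewrite /p; field.
rewrite /rho -powRrM ex !powRB // powRD; last by apply/implyP.
rewrite -/kap -/E !powRr1 ?ltW //; last exact: Kpos.
have akap : 2 * (alpha + 1) * kap != 0 by rewrite !mulf_neq0 // pnatr_eq0.
have HT : X + D * Z = ((m%:R + (alpha + 1) * k%:R + 2 * alpha) * (Y + D * W) + A * E) / (2 * (alpha + 1) * kap).
  apply: (mulfI akap); rewrite H; field.
  by rewrite kap0 a1.
have HX : X = ((m%:R + (alpha + 1) * k%:R + 2 * alpha) * (Y + D * W) + A * E) / (2 * (alpha + 1) * kap) - D * Z.
  by rewrite -HT; ring.
rewrite HX /lambda /p /Q.
by field; rewrite kap0 a1.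
Qed.
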